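(* Let $G=(V,E)$ be a simple connected graph with $N\ge 2$ nodes. For the Mellin transform with parameter $s>0$ let $w_{ij}=d_{ij}^{-s}$ for all pairs $i\neq j$, and for the Laplace transform with parameter $\lambda>0$ let $w_{ij}=e^{-\lambda d_{ij}}$ if $d_{ij}>1$ and $w_{ij}=1$ if $(i,j)\in E$. Let $\tilde{L}_\tau(G,w)$ be the corresponding transformed $d$-path Laplacian, i.e. the weighted Laplacian with off-diagonal entries $-w_{ij}$ and diagonal entries $\sum_{j\neq i}w_{ij}$ (equivalently $\sum_{d=1}^{d_{max}}d^{-s}L_d$ in the Mellin case and $L+\sum_{d=2}^{d_{max}}e^{-\lambda d}L_d$ in the Laplace case), and let $\lambda_2(G,w)$ and $\lambda_N(G,w)$ be its second smallest and largest eigenvalues. If $s'<s$ (Mellin case) or $\lambda'<\lambda$ (Laplace case), and $w'$ denotes the weights with parameter $s'$ (resp. $\lambda'$), then $\lambda_2(G,w')\ge\lambda_2(G,w)$ and $\lambda_N(G,w')\ge\lambda_N(G,w)$. That is, $\lambda_2(G,w)$ and $\lambda_N(G,w)$ are non-increasing in $s$ (resp. $\lambda$).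
   Context: $d_{ij}$ is the shortest-path distance between nodes $i,j$ in $G$ and $d_{max}$ the diameter. $L$ is the usual graph Laplacian. For $1\le d\le d_{max}$, $L_d$ is the $N\times N$ matrix with $(L_d)_{ij}=-1$ if $i\ne j$ and $d_{ij}=d$, $0$ for other off-diagonal entries, and $(L_d)_{ii}$ equal to the number of nodes at distance $d$ from $i$. Eigenvalues are ordered $0=\lambda_1\le\lambda_2\le\cdots\le\lambda_N$. *)

(* Defs.v *)
From HB Require Import structures.
From mathcomp Require Import all_boot all_order all_algebra.
From mathcomp Require Import all_classical all_reals all_analysis.
Set Implicit Arguments. Unset Strict Implicit. Unset Printing Implicit Defensive.
Import Order.TTheory GRing.Theory Num.Theory.
Local Open Scope ring_scope.

Definition simple_graph (N : nat) (e : rel 'I_N) : Prop :=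
  symmetric e /\ irreflexive e.

Definition connected_graph (N : nat) (e : rel 'I_N) : Prop :=
  forall x y : 'I_N, connect e x y.

Definition walkb (N : nat) (e : rel 'I_N) (k : nat) (x y : 'I_N) : bool :=
  [exists p : k.-tuple 'I_N, path e x p && (last x p == y)].

(* shortest-path distance d_ij: the least k < N such that a k-edge walk
   from x to y exists (in a connected graph such k always exists). *)
Definition gdist (N : nat) (e : rel 'I_N) (x y : 'I_N) : nat :=
  find (fun k => walkb e k x y) (iota 0 N).

Definition wlaplacian (R : ringType) (N : nat) (w : 'I_N -> 'I_N -> R)
  : 'M[R]_N :=
  \matrix_(i, j) if i == j then \sum_(k | k != i) w i k else - w i j.

Definition mellin_w (R : realType) (N : nat) (e : rel 'I_N) (s : R)
  (i j : 'I_N) : R := ((gdist e i j)%:R) `^ (- s).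

Definition laplace_w (R : realType) (N : nat) (e : rel 'I_N) (l : R)
  (i j : 'I_N) : R :=
  if e i j then 1 else expR (- (l * (gdist e i j)%:R)).

(* s is the list of eigenvalues of A (with multiplicity) in nondecreasing
   order: sorted and char_poly A = prod_(x <- s) (X - x). For a real
   symmetric matrix such a list exists and is unique. *)
Definition sorted_eigenvalues (R : realType) (N : nat) (A : 'M[R]_N)
  (s : seq R) : Prop :=
  sorted <=%R s /\ char_poly A = \prod_(x <- s) ('X - x%:P).

(* Main.v *)
Require Import Defs.
From HB Require Import structures.
From mathcomp Require Import all_boot all_order all_algebra.
From mathcomp Require Import all_classical all_reals all_analysis.
From mathcomp Require Import spectral sesquilinear zify complex ring.
Set Implicit Arguments. Unset Strict Implicit. Unset Printing Implicit Defensive.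
Import Order.TTheory GRing.Theory Num.Theory.
Import ComplexField.
Local Open Scope ring_scope.

Module Aux.
Local Open Scope sesquilinear_scope.
Lemma char_poly_conj (F : fieldType) n (P D : 'M[F]_n) : P \in unitmx ->
  char_poly (invmx P *m D *m P) = char_poly D.
Proof.
move=> Pu; rewrite /char_poly.
pose Pp := map_mx polyC P; pose Pi := map_mx polyC (invmx P).
have PiP : Pi *m Pp = 1%:M by rewrite -map_mxM mulVmx // map_mx1.
have -> : char_poly_mx (invmx P *m D *m P) = Pi *m char_poly_mx D *m Pp.
  rewrite /char_poly_mx mulmxBr mulmxBl !map_mxM mul_mx_scalar -scalemxAl PiP.
  by rewrite scalemx1.
by rewrite !det_mulmx mulrAC -det_mulmx PiP det1 mul1r.
Qed.
Lemma wlapE (R : ringType) n (w : 'I_n -> 'I_n -> R) i j :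
  wlaplacian w i j = if i == j then \sum_(k | k != i) w i k else - w i j.
Proof. by rewrite /wlaplacian mxE. Qed.
Section Core.
Variable C : numClosedFieldType.

Definition Qf n (M : 'M[C]_n) (v : 'rV[C]_n) : C := (v *m M *m v ^t*) 0 0.

Lemma Qf_spectral n (P : 'M[C]_n) (d : 'rV[C]_n) v : P \is unitarymx ->
  Qf (invmx P *m diag_mx d *m P) v =
  \sum_i d 0 i * ((v *m P^t*) 0 i * ((v *m P^t*) 0 i)^*).
Proof.
move=> Pu; rewrite /Qf invmx_unitary //.
have -> : v *m (P^t* *m diag_mx d *m P) *m v^t* =
   (v *m P^t*) *m diag_mx d *m (v *m P^t*)^t*.
  by rewrite trmx_mul map_mxM trmxCK !mulmxA.
rewrite mul_mx_diag !mxE; apply: eq_bigr => i _; rewrite !mxE.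
by rewrite mulrCA mulrA.
Qed.

Lemma Qf1 n (P : 'M[C]_n) v : P \is unitarymx ->
  Qf 1%:M v = \sum_i ((v *m P^t*) 0 i * ((v *m P^t*) 0 i)^*).
Proof.
move=> Pu; have -> : (1%:M : 'M[C]_n) = invmx P *m diag_mx (const_mx 1) *m P.
  by rewrite diag_const_mx mulmx1 mulVmx // unitarymx_unit.
by rewrite Qf_spectral //; apply: eq_bigr => i _; rewrite mxE mul1r.
Qed.

Lemma Qf1_gt0 n (v : 'rV[C]_n) : v != 0 -> 0 < Qf 1%:M v.
Proof.
move=> vn0; have := dotmx_is_dotmx vn0; rewrite dotmxE /Qf mulmx1 //.
Qed.

Lemma Qf_lower n (P : 'M[C]_n) (d : 'rV[C]_n) v (mu : C) :
  P \is unitarymx -> (forall i, d 0 i \is Num.real) -> mu \is Num.real ->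
  (forall i, d 0 i < mu -> (v *m P^t*) 0 i = 0) ->
  mu * Qf 1%:M v <= Qf (invmx P *m diag_mx d *m P) v.
Proof.
move=> Pu dr mur H; rewrite Qf_spectral // (Qf1 _ Pu) mulr_sumr.
apply: ler_sum => i _.
have [/H ->|] := boolP (d 0 i < mu); first by rewrite !mul0r !mulr0.
rewrite -real_leNgt // => le; apply: ler_wpM2r => //; exact: mul_conjC_ge0.
Qed.

Lemma Qf_upper n (P : 'M[C]_n) (d : 'rV[C]_n) v (nu : C) :
  P \is unitarymx ->
  (forall i, ~~ (d 0 i <= nu) -> (v *m P^t*) 0 i = 0) ->
  Qf (invmx P *m diag_mx d *m P) v <= nu * Qf 1%:M v.
Proof.
move=> Pu H; rewrite Qf_spectral // (Qf1 _ Pu) mulr_sumr.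
apply: ler_sum => i _.
have [le|/H ->] := boolP (d 0 i <= nu); last by rewrite !mul0r !mulr0.
apply: ler_wpM2r => //; exact: mul_conjC_ge0.
Qed.


Lemma weyl_core n (P P' : 'M[C]_n) (d d' : 'rV[C]_n) (mu nu : C) :
  P \is unitarymx -> P' \is unitarymx ->
  (forall i, d 0 i \is Num.real) -> mu \is Num.real ->
  (forall v, Qf (invmx P *m diag_mx d *m P) v <= Qf (invmx P' *m diag_mx d' *m P') v) ->
  (#|[set i | (d 0 i < mu)%R]| < #|[set i | (d' 0 i <= nu)%R]|)%N ->
  mu <= nu.
Proof.
move=> Pu P'u dr mur HQ.
set J := [set i | (d 0 i < mu)%R]; set I := [set i | (d' 0 i <= nu)%R] => card_lt.
pose U : 'M[C]_(#|I|, n) := \matrix_(k < #|I|) row (enum_val k) P'.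
pose W : 'M[C]_(#|J|, n) := \matrix_(k < #|J|) row (enum_val k) P.
have UP : forall k j, (U *m P'^t*) k j = (enum_val k == j)%:R.
  move=> k j; have /unitarymxP/matrixP/(_ (enum_val k) j) := P'u.
  rewrite !mxE => <-; apply: eq_bigr => l _; rewrite !mxE //.
have Uu : U \is unitarymx.
  apply/unitarymxP/matrixP => k l.
  have := UP k (enum_val l); rewrite !mxE => E.
  idtac.

  rewrite -[RHS]/((k == l)%:R) -(inj_eq enum_val_inj) -E.
  by apply: eq_bigr => m _; rewrite !mxE.
have rU : \rank U = #|I| by exact: mxrank_unitary.
pose K := kermx (W ^t*).
have rK : (n - #|J| <= \rank K)%N.
  by rewrite mxrank_ker mxrank_map mxrank_tr leq_sub2l // rank_leq_row.
have : (0 < \rank (U :&: K)%MS)%N.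
  have := mxrank_sum_cap U K; have := rank_leq_col (U + K)%MS.
  move: rK card_lt; rewrite rU; lia.
rewrite lt0n mxrank_eq0 => /rowV0Pn [v vUK vn0].
have vU : (v <= U)%MS := submx_trans vUK (capmxSl _ _).
have /sub_kermxP vW : (v <= K)%MS := submx_trans vUK (capmxSr _ _).
have [x vx] := submxP vU.
have lowr := Qf_lower (v:=v) Pu dr mur.
have upr := Qf_upper (v:=v) (nu:=nu) P'u.
have N0 := Qf1_gt0 vn0.
rewrite -(ler_pM2r N0); apply: le_trans (lowr _) _.
  move=> i di; have iJ : i \in J by rewrite inE.
  have /matrixP/(_ 0 (enum_rank_in iJ i)) := vW.
  rewrite !mxE => E; rewrite -[RHS]E; apply: eq_bigr => m _.
  by rewrite !mxE enum_rankK_in.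
apply: le_trans (HQ v) _; apply: upr => i iI.
rewrite vx -mulmxA mxE; apply: big1 => k _; rewrite UP.
have := enum_valP k; rewrite inE; case: eqP => [->|_ _]; last by rewrite mulr0.
by rewrite (negbTE iI).
Qed.
End Core.

Section Lap.
Variable C : numClosedFieldType.

Lemma Qf_lap n (u : 'I_n -> 'I_n -> C) v :
  (forall i j, u i j = u j i) -> (forall i j, 0 <= u i j) ->
  0 <= Qf (wlaplacian u) v.
Proof.
move=> us up.
pose T i j := u i j * (v 0 i * (v 0 i)^* - v 0 i * (v 0 j)^*).
have QE : Qf (wlaplacian u) v = \sum_i \sum_j T i j.
  rewrite /Qf mxE.
  under eq_bigr do rewrite mxE mulr_suml.
  rewrite exchange_big /=; apply: eq_bigr => i _.
  rewrite (bigD1 i) //= [RHS](bigD1 i) //= /T subrr mulr0 add0r wlapE eqxx.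
  have -> : \sum_(j | j != i) v 0 i * wlaplacian u i j * (v^t*) j 0 =
     \sum_(j | j != i) - (u i j * (v 0 i * (v 0 j)^*)).
    apply: eq_bigr => j ji; rewrite wlapE !mxE eq_sym (negbTE ji); ring.
  rewrite !mxE.
  under [RHS]eq_bigr do rewrite mulrBr.
  rewrite sumrB sumrN mulr_sumr mulr_suml; congr (_ - _).
  by apply: eq_bigr => j _; ring.
have : 0 <= Qf (wlaplacian u) v + Qf (wlaplacian u) v.
  rewrite {1}QE {1}QE [X in _ + X]exchange_big -big_split /=.
  apply: sumr_ge0 => i _; rewrite -big_split /=; apply: sumr_ge0 => j _.
  have -> : T i j + T j i = u i j * ((v 0 i - v 0 j) * (v 0 i - v 0 j)^*).
    by rewrite /T (us j i) rmorphB /=; ring.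
  by apply: mulr_ge0 => //; exact: mul_conjC_ge0.
by rewrite -mulr2n pmulrn_lge0.
Qed.
End Lap.

Section RealPart.
Variable R : rcfType.
Local Notation ofR := (real_complex R).

Lemma ofR_real (x : R) : ofR x \is Num.real.
Proof. by apply/complex_realP; exists x. Qed.

Lemma wlap_tr n (w : 'I_n -> 'I_n -> R) : (forall i j, w i j = w j i) ->
  (wlaplacian w)^T = wlaplacian w.
Proof.
move=> ws; apply/matrixP => i j; rewrite /wlaplacian !mxE eq_sym.
by case: eqP => [->|_] //; rewrite ws.
Qed.

Lemma wlapB n (w w' : 'I_n -> 'I_n -> R) :
  wlaplacian w' - wlaplacian w = wlaplacian (fun i j => w' i j - w i j).
Proof.
apply/matrixP => i j; rewrite /wlaplacian !mxE; case: eqP => _; last by rewrite opprB addrC opprK addrC.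
by rewrite sumrB.
Qed.

Lemma map_wlap n (w : 'I_n -> 'I_n -> R) :
  map_mx ofR (wlaplacian w) = wlaplacian (fun i j => ofR (w i j)).
Proof.
apply/matrixP => i j; rewrite /wlaplacian !mxE; case: eqP => _; last by rewrite rmorphN.
by rewrite rmorph_sum.
Qed.

Lemma spec_data n (w : 'I_n -> 'I_n -> R) (ev : seq R) :
  (forall i j, w i j = w j i) ->
  char_poly (wlaplacian w) = \prod_(x <- ev) ('X - x%:P) ->
  let A := map_mx ofR (wlaplacian w) in
  A = invmx (spectralmx A) *m diag_mx (spectral_diag A) *m spectralmx A /\
  perm_eq [seq ofR x | x <- ev] [seq spectral_diag A 0 i | i <- enum 'I_n].
Proof.
move=> ws cp A.
have At : A^t* = A.
  rewrite /A map_trmx wlap_tr // -map_mx_comp; apply: eq_map_mx => x /=.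
  exact: conjc_real.
have An : A \is normalmx by apply/normalmxP; rewrite At.
have AE := orthomx_spectralP An.
split => //; apply: prod_XsubC_eq.
have -> : \prod_(x <- [seq ofR x | x <- ev]) ('X - x%:P) = char_poly A.
  rewrite big_map /A -map_char_poly cp rmorph_prod; apply: eq_bigr => x _.
  by rewrite /= map_polyXsubC.
rewrite {1}AE char_poly_conj ?spectral_unit // char_poly_trig ?diag_mx_is_trig //.
rewrite big_map big_enum /=; apply: eq_bigr => i _; by rewrite mxE eqxx mulr1n.
Qed.

Lemma card_count (T: finType) (P : pred T) : #|[set i | P i]| = count P (enum T).
Proof. by rewrite cardsE cardE /enum_mem size_filter (@eq_filter _ _ predT) // filter_predT. Qed.

Lemma card_ev n (d : 'rV[R[i]]_n) (ev : seq R) (p : pred R[i]) :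
  perm_eq [seq ofR x | x <- ev] [seq d 0 i | i <- enum 'I_n] ->
  #|[set i | p (d 0 i)]| = count (fun x => p (ofR x)) ev.
Proof.
move=> pe; rewrite card_count -(count_map (fun i => d 0 i) p).
by rewrite -(permP pe) count_map.
Qed.

Lemma real_ev n (d : 'rV[R[i]]_n) (ev : seq R) :
  perm_eq [seq ofR x | x <- ev] [seq d 0 i | i <- enum 'I_n] ->
  forall i, d 0 i \is Num.real.
Proof.
move=> pe i; have : d 0 i \in [seq d 0 i | i <- enum 'I_n] by rewrite map_f ?mem_enum.
by rewrite -(perm_mem pe) => /mapP [x _ ->]; exact: ofR_real.
Qed.

Lemma Qf_add n (A D : 'M[R[i]]_n) v : Qf (A + D) v = Qf A v + Qf D v.
Proof. by rewrite /Qf mulmxDr mulmxDl mxE. Qed.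

Lemma weyl_real n (w w' : 'I_n -> 'I_n -> R) (ev ev' : seq R) k :
  (forall i j, w i j = w j i) -> (forall i j, w' i j = w' j i) ->
  (forall i j, w i j <= w' i j) ->
  sorted <=%R ev -> char_poly (wlaplacian w) = \prod_(x <- ev) ('X - x%:P) ->
  sorted <=%R ev' -> char_poly (wlaplacian w') = \prod_(x <- ev') ('X - x%:P) ->
  (k < n)%N -> ev`_k <= ev'`_k.
Proof.
move=> ws ws' ww' sev cp sev' cp' kn.
have [AE pe] := spec_data ws cp; have [BE pe'] := spec_data ws' cp'.
set A := map_mx ofR (wlaplacian w) in AE pe.
set B := map_mx ofR (wlaplacian w') in BE pe'.
have sz : size ev = n.
  by have := congr1 (fun p : {poly R} => size p) cp; rewrite size_char_poly size_prod_XsubC => -[].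
have sz' : size ev' = n.
  by have := congr1 (fun p : {poly R} => size p) cp'; rewrite size_char_poly size_prod_XsubC => -[].
rewrite -lecR; apply: (weyl_core (d' := spectral_diag B) (spectral_unitarymx A) (spectral_unitarymx B)
   (real_ev pe) (ofR_real _)).
  move=> v; rewrite -AE -BE.
  have -> : B = A + map_mx ofR (wlaplacian (fun i j => w' i j - w i j)).
    by rewrite -wlapB map_mxB /= addrC subrK.
  rewrite Qf_add lerDl map_wlap; apply: Qf_lap => i j.
    by rewrite ws ws'.
  by rewrite -(rmorph0 ofR) lecR subr_ge0.
rewrite (card_ev (fun x => (x < ofR (ev`_k))%R) pe) (card_ev (fun x => (x <= ofR (ev'`_k))%R) pe').
under eq_count do rewrite ltcR.
under [X in (_ < X)%N]eq_count do rewrite lecR.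
have c1 : (count (fun x => (x < ev`_k)%R) ev <= k)%N.
  rewrite leqNgt; apply/negP => /(nth_count_lt 0 sev); by rewrite ltxx.
have c2 : (k < count (fun x => (x <= ev'`_k)%R) ev')%N.
  rewrite ltnNge; apply/negP => H.
  have := @nth_count_gt _ _ (ev'`_k)%R 0 ev' k sev'; rewrite H sz' kn ltxx.
  by move/(_ isT).
exact: leq_ltn_trans c1 c2.
Qed.
End RealPart.

End Aux.
Import Aux.

Lemma walkb_sym N (e : rel 'I_N) k x y : symmetric e -> walkb e k x y -> walkb e k y x.
Proof.
move=> es /existsP [p /andP [pp /eqP lp]].
have sz : size (rev (belast x p)) == k by rewrite size_rev size_belast size_tuple.
apply/existsP; exists (Tuple sz); apply/andP; split => /=.
  rewrite -lp rev_path; rewrite (@eq_path _ _ e) // => a b /=; exact: es.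
move: lp; case: (tval p) => [|z q] /= <-; first by [].
by rewrite rev_cons last_rcons.
Qed.

Lemma gdist_sym N (e : rel 'I_N) x y : symmetric e -> gdist e x y = gdist e y x.
Proof.
move=> es; rewrite /gdist; apply: eq_find => k.
by apply/idP/idP; apply: walkb_sym.
Qed.

Theorem lemma3 (R : realType) (N : nat) (e : rel 'I_N) :
  (2 <= N)%N -> simple_graph e -> connected_graph e ->
  (* Mellin case *)
  (forall (s s' : R) (ev ev' : seq R),
     0 < s' -> s' < s ->
     sorted_eigenvalues (wlaplacian (mellin_w e s)) ev ->
     sorted_eigenvalues (wlaplacian (mellin_w e s')) ev' ->
     ev`_1 <= ev'`_1 /\ ev`_N.-1 <= ev'`_N.-1) /\
  (* Laplace case *)
  (forall (l l' : R) (ev ev' : seq R),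
     0 < l' -> l' < l ->
     sorted_eigenvalues (wlaplacian (laplace_w e l)) ev ->
     sorted_eigenvalues (wlaplacian (laplace_w e l')) ev' ->
     ev`_1 <= ev'`_1 /\ ev`_N.-1 <= ev'`_N.-1).
Proof.
move=> N2 [es _] _.
have k1 : (1 < N)%N by [].
have k2 : (N.-1 < N)%N by rewrite prednK ?leqnn //; apply: leq_trans N2.
split.
  move=> s s' ev ev' s'0 ss' [sev cp] [sev' cp'].
  have ms : forall (t : R) (i j : 'I_N), mellin_w e t i j = mellin_w e t j i.
    by move=> t i j; rewrite /mellin_w gdist_sym.
  have mono : forall i j, mellin_w e s i j <= mellin_w e s' i j.
    move=> i j; rewrite /mellin_w; case: (gdist e i j) => [|n].
      rewrite powR0 ?powR_ge0 // oppr_eq0 gt_eqF //; exact: lt_trans ss'.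
    by apply: ler_powR; [rewrite ler1n | rewrite lerN2 ltW].
  by split; apply: (weyl_real (ms s) (ms s') mono).
move=> l l' ev ev' l'0 ll' [sev cp] [sev' cp'].
have ms : forall (t : R) (i j : 'I_N), laplace_w e t i j = laplace_w e t j i.
  by move=> t i j; rewrite /laplace_w gdist_sym // es.
have mono : forall i j, laplace_w e l i j <= laplace_w e l' i j.
  move=> i j; rewrite /laplace_w; case: (e i j) => //.
  by rewrite ler_expR lerN2 ler_wpM2r // ltW.
by split; apply: (weyl_real (ms l) (ms l') mono).
Qed.
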